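(* Let $\Gamma$ be any context of $\lambda\mathsf{HOL}$ (possibly extended by constants and additional conversion rules) in which there are a type $A:\square$ and terms $\mathsf{intro}:T\,A\to A$ and $\mathsf{match}:A\to T\,A$ such that $\mathsf{match}\circ\mathsf{intro}$ is judgementally equal to $T\,(\mathsf{intro}\circ\mathsf{match})$; explicitly, for all $u:T\,A$ and $p:\mathsf{Pow}\,A$, $\mathsf{match}\,(\mathsf{intro}\,u)\,p$ is judgementally equal to $u\,(\lambda_{x:A}\,p\,(\mathsf{intro}\,(\mathsf{match}\,x)))$. Then there is a term of type $\perp$ in $\Gamma$.
   Context: $\lambda\mathsf{HOL}$ (minimal higher-order logic) is the pure type system with sorts $*,\square,\Delta$, axioms $*:\square$ and $\square:\Delta$, and rules $( *,* )$, $(\square,\square)$, $(\square,* )$; judgemental equality is $\beta$-conversion. Define $\mathsf{Pow}\,X = X\to *$ and $T\,X=\mathsf{Pow}(\mathsf{Pow}\,X)$. For $f:X\to Y$, define $T\,f:T\,X\to T\,Y$ by $T\,f\,F\,q = F\,(\lambda_{x:X}\,q\,(f\,x))$, and $g\circ f=\lambda_{x:X}\,g\,(f\,x)$. Define $\perp:*$ by $\perp=\forall_{p:*}\,p$. *)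

(* Defs.v *)
(* Deep embedding of the pure type system lambda-HOL
   (de Bruijn indices), with judgemental equality given by a parameter
   relation [eqr] required to be a congruence containing beta
   (i.e. beta-conversion possibly extended by additional conversion rules). *)
From Stdlib Require Import List Arith.
Import ListNotations.

Inductive sort : Set := Star | Box | Tri.

Inductive term : Set :=
| Srt : sort -> term
| Var : nat -> term
| Pi  : term -> term -> term   (* Pi A B, B under one binder *)
| Lam : term -> term -> term   (* Lam A b, b under one binder *)
| App : term -> term -> term.

Fixpoint lift (n k : nat) (t : term) : term :=
  match t with
  | Srt s => Srt s
  | Var i => if k <=? i then Var (i + n) else Var i
  | Pi A B => Pi (lift n k A) (lift n (S k) B)
  | Lam A b => Lam (lift n k A) (lift n (S k) b)
  | App f a => App (lift n k f) (lift n k a)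
  end.

Fixpoint subst (u : term) (k : nat) (t : term) : term :=
  match t with
  | Srt s => Srt s
  | Var i => match Nat.compare i k with
             | Lt => Var i
             | Eq => lift k 0 u
             | Gt => Var (pred i)
             end
  | Pi A B => Pi (subst u k A) (subst u (S k) B)
  | Lam A b => Lam (subst u k A) (subst u (S k) b)
  | App f a => App (subst u k f) (subst u k a)
  end.

Inductive beta1 : term -> term -> Prop :=
| beta_redex : forall A b a, beta1 (App (Lam A b) a) (subst a 0 b)
| beta_pi1 : forall A A' B, beta1 A A' -> beta1 (Pi A B) (Pi A' B)
| beta_pi2 : forall A B B', beta1 B B' -> beta1 (Pi A B) (Pi A B')
| beta_lam1 : forall A A' b, beta1 A A' -> beta1 (Lam A b) (Lam A' b)
| beta_lam2 : forall A b b', beta1 b b' -> beta1 (Lam A b) (Lam A b')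
| beta_app1 : forall f f' a, beta1 f f' -> beta1 (App f a) (App f' a)
| beta_app2 : forall f a a', beta1 a a' -> beta1 (App f a) (App f a').

Record judg_eq (eqr : term -> term -> Prop) : Prop := {
  je_refl  : forall t, eqr t t;
  je_sym   : forall t u, eqr t u -> eqr u t;
  je_trans : forall t u v, eqr t u -> eqr u v -> eqr t v;
  je_beta  : forall t u, beta1 t u -> eqr t u;
  je_pi    : forall A A' B B', eqr A A' -> eqr B B' -> eqr (Pi A B) (Pi A' B');
  je_lam   : forall A A' b b', eqr A A' -> eqr b b' -> eqr (Lam A b) (Lam A' b');
  je_app   : forall f f' a a', eqr f f' -> eqr a a' -> eqr (App f a) (App f' a')
}.

Inductive ax : sort -> sort -> Prop :=
| ax_star : ax Star Box
| ax_box  : ax Box Tri.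

Inductive rl : sort -> sort -> Prop :=
| rl_ss : rl Star Star
| rl_bb : rl Box Box
| rl_bs : rl Box Star.

(* contexts: the head is the most recently declared variable (index 0) *)
Definition ctx := list term.

Inductive typ (eqr : term -> term -> Prop) : ctx -> term -> term -> Prop :=
| t_ax : forall s1 s2, ax s1 s2 -> typ eqr [] (Srt s1) (Srt s2)
| t_start : forall G A s, typ eqr G A (Srt s) ->
    typ eqr (A :: G) (Var 0) (lift 1 0 A)
| t_weak : forall G t B C s, typ eqr G t B -> typ eqr G C (Srt s) ->
    typ eqr (C :: G) (lift 1 0 t) (lift 1 0 B)
| t_pi : forall G A B s1 s2, rl s1 s2 ->
    typ eqr G A (Srt s1) -> typ eqr (A :: G) B (Srt s2) ->
    typ eqr G (Pi A B) (Srt s2)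
| t_lam : forall G A b B s, typ eqr (A :: G) b B -> typ eqr G (Pi A B) (Srt s) ->
    typ eqr G (Lam A b) (Pi A B)
| t_app : forall G f a A B, typ eqr G f (Pi A B) -> typ eqr G a A ->
    typ eqr G (App f a) (subst a 0 B)
| t_conv : forall G t B B' s, typ eqr G t B -> typ eqr G B' (Srt s) -> eqr B B' ->
    typ eqr G t B'.

Definition arr (A B : term) : term := Pi A (lift 1 0 B).
Definition Pow (X : term) : term := arr X (Srt Star).
Definition TT (X : term) : term := Pow (Pow X).
Definition Bot : term := Pi (Srt Star) (Var 0).

(* The equation  match (intro u) p == u (fun x : A => p (intro (match x)))
   for A, intro, match living in G and weakened by k further declarations. *)
Definition eqn_lhs (k : nat) (it mt u p : term) : term :=
  App (App (lift k 0 mt) (App (lift k 0 it) u)) p.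
Definition eqn_rhs (k : nat) (A it mt u p : term) : term :=
  App u (Lam (lift k 0 A)
    (App (lift 1 0 p) (App (lift (S k) 0 it) (App (lift (S k) 0 mt) (Var 0))))).

(* Main.v *)
Require Import Defs.
From Stdlib Require Import List Arith Lia.
Import ListNotations.

Lemma lift_lift t : forall n m k j, k <= j -> j <= k + n ->
  lift m j (lift n k t) = lift (m + n) k t.
Proof.
  induction t; intros; simpl.
  - reflexivity.
  - destruct (Nat.leb_spec k n); simpl.
    + destruct (Nat.leb_spec j (n + n0)); [f_equal; lia | lia].
    + destruct (Nat.leb_spec j n); [lia | reflexivity].
  - f_equal; [apply IHt1 | apply IHt2]; lia.
  - f_equal; [apply IHt1 | apply IHt2]; lia.
  - f_equal; [apply IHt1 | apply IHt2]; lia.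
Qed.

Lemma subst_lift t : forall u n k j, k <= j -> j <= k + n ->
  subst u j (lift (S n) k t) = lift n k t.
Proof.
  induction t; intros; simpl.
  - reflexivity.
  - destruct (Nat.leb_spec k n); simpl.
    + destruct (Nat.compare_spec (n + S n0) j); try lia. f_equal; lia.
    + destruct (Nat.compare_spec n j); try lia. reflexivity.
  - f_equal; [apply IHt1 | apply IHt2]; lia.
  - f_equal; [apply IHt1 | apply IHt2]; lia.
  - f_equal; [apply IHt1 | apply IHt2]; lia.
Qed.

Lemma lift0 t : forall k, lift 0 k t = t.
Proof.
  induction t; intros; simpl; try (f_equal; auto; fail).
  destruct (k <=? n); f_equal; lia.
Qed.

Inductive ext (eqr : term -> term -> Prop) (G : ctx) : ctx -> Prop :=
| ext_nil : ext eqr G []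
| ext_cons : forall D C s, ext eqr G D -> typ eqr (D ++ G) C (Srt s) -> ext eqr G (C :: D).

Lemma star_in eqr G t T : typ eqr G t T -> typ eqr G (Srt Star) (Srt Box).
Proof.
  induction 1; auto.
  - constructor; constructor.
  - change (Srt Star) with (lift 1 0 (Srt Star)) at 1.
    change (Srt Box) with (lift 1 0 (Srt Box)).
    eapply t_weak; eauto.
  - change (Srt Star) with (lift 1 0 (Srt Star)) at 1.
    change (Srt Box) with (lift 1 0 (Srt Box)).
    eapply t_weak; eauto.
Qed.

Lemma weaken eqr G D t T : ext eqr G D -> typ eqr G t T ->
  typ eqr (D ++ G) (lift (length D) 0 t) (lift (length D) 0 T).
Proof.
  induction 1; intros Ht.
  - simpl. rewrite !lift0. exact Ht.
  - simpl. rewrite <- (Nat.add_1_l (length D)).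
    rewrite <- !(lift_lift _ (length D) 1 0 0) by lia.
    eapply t_weak; eauto.
Qed.

Lemma tvar eqr G D n X T : ext eqr G D -> nth_error D n = Some X ->
  lift (S n) 0 X = T -> typ eqr (D ++ G) (Var n) T.
Proof.
  intros HD; revert n X T; induction HD; intros n X T Hn HT; subst.
  - destruct n; discriminate.
  - destruct n; simpl in Hn.
    + injection Hn as ->. simpl. eapply t_start; eauto.
    + simpl. replace (Var (S n)) with (lift 1 0 (Var n)) by (simpl; f_equal; lia).
      replace (lift (S (S n)) 0 X) with (lift 1 0 (lift (S n) 0 X))
        by (rewrite lift_lift by lia; reflexivity).
      eapply t_weak; eauto.
Qed.

Lemma tleaf eqr G D t T0 k T : ext eqr G D -> typ eqr G t T0 -> k = length D ->
  lift k 0 T0 = T -> typ eqr (D ++ G) (lift k 0 t) T.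
Proof. intros; subst; apply weaken; auto. Qed.

Lemma tsort eqr G D T : ext eqr G D -> typ eqr G (Srt Star) (Srt Box) ->
  Srt Box = T -> typ eqr (D ++ G) (Srt Star) T.
Proof.
  intros HD H <-. change (Srt Star) with (lift (length D) 0 (Srt Star)) at 1.
  change (Srt Box) with (lift (length D) 0 (Srt Box)). apply weaken; auto.
Qed.

Lemma tpi eqr G D X B s1 s2 T : typ eqr (D ++ G) X (Srt s1) ->
  typ eqr ((X :: D) ++ G) B (Srt s2) -> rl s1 s2 -> Srt s2 = T ->
  typ eqr (D ++ G) (Pi X B) T.
Proof. intros; subst; eapply t_pi; eauto. Qed.

Lemma tlam eqr G D X b B s T : typ eqr ((X :: D) ++ G) b B ->
  typ eqr (D ++ G) (Pi X B) (Srt s) -> Pi X B = T ->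
  typ eqr (D ++ G) (Lam X b) T.
Proof. intros; subst; eapply t_lam; eauto. Qed.

Lemma tapp eqr G D f a X B T : typ eqr (D ++ G) f (Pi X B) ->
  typ eqr (D ++ G) a X -> subst a 0 B = T ->
  typ eqr (D ++ G) (App f a) T.
Proof. intros; subst; eapply t_app; eauto. Qed.

Definition eqrD (eqr : term -> term -> Prop) (D : ctx) := eqr.

Lemma tconv eqr G D t B B' s : typ eqr (D ++ G) t B ->
  eqrD eqr D B B' -> typ eqr (D ++ G) B' (Srt s) ->
  typ eqr (D ++ G) t B'.
Proof. intros; eapply t_conv; eauto. Qed.

Lemma eqr_step_l eqr X X' Y : judg_eq eqr -> beta1 X X' -> eqr X' Y -> eqr X Y.
Proof. intros HJ H1 H2. eapply (je_trans _ HJ); [apply (je_beta _ HJ); exact H1 | exact H2]. Qed.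

Lemma eqr_step_r eqr X Y Y' : judg_eq eqr -> beta1 Y Y' -> eqr X Y' -> eqr X Y.
Proof. intros HJ H1 H2. eapply (je_trans _ HJ); [exact H2 | apply (je_sym _ HJ), (je_beta _ HJ); exact H1]. Qed.

Lemma eqr_rw_l eqr X M Y : judg_eq eqr -> eqr X M -> eqr M Y -> eqr X Y.
Proof. intros HJ; apply (je_trans _ HJ). Qed.

Lemma eqr_rw_r eqr X M Y : judg_eq eqr -> eqr Y M -> eqr X M -> eqr X Y.
Proof. intros HJ H1 H2; eapply (je_trans _ HJ); [exact H2 | apply (je_sym _ HJ); exact H1]. Qed.

Definition U (A : term) d := lift d 0 A.
Definition sm (mt : term) d x p := App (App (lift d 0 mt) x) p.
Definition ISx it mt d x := App (lift d 0 it) (App (lift d 0 mt) x).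
Definition bot := Pi (Srt Star) (Var 0).
Definition Cc A mt d := Lam (Pi (U A d) (Srt Star))
  (Pi (U A (S d)) (Pi (sm mt (S (S d)) (Var 0) (Var 1)) (App (Var 2) (Var 1)))).
Definition Om A it mt d := App (lift d 0 it) (Cc A mt d).
Definition Qq A it mt d := Lam (U A (3+d)) (App (Var 3) (ISx it mt (4+d) (Var 0))).
Definition Kk A it mt d := Lam (U A (2+d)) (Lam (sm mt (3+d) (Var 0) (Qq A it mt d))
   (App (App (Var 2) (ISx it mt (4+d) (Var 1))) (Var 0))).
Definition L0 A it mt d := Lam (Pi (U A d) (Srt Star))
  (Lam (Pi (U A (S d)) (Pi (sm mt (2+d) (Var 0) (Var 1)) (App (Var 2) (Var 1))))
   (App (App (Var 0) (Om A it mt (2+d))) (Kk A it mt d))).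
Definition Dl A it mt d := Lam (U A d) (Pi (Pi (Pi (U A (S d)) (Srt Star))
   (Pi (sm mt (2+d) (Var 1) (Var 0)) (App (Var 1) (ISx it mt (3+d) (Var 2))))) bot).
Definition Xp A it mt d := Lam (U A (2+d)) (App (Var 2) (ISx it mt (3+d) (Var 0))).
Definition L2 A it mt d := Lam (Pi (U A d) (Srt Star)) (Lam (sm mt (1+d) (Om A it mt (1+d)) (Var 0))
   (App (App (L0 A it mt (2+d)) (Xp A it mt d)) (Var 0))).
Definition Fty A it mt d := Pi (Pi (U A (2+d)) (Srt Star))
   (Pi (sm mt (3+d) (Var 2) (Var 0)) (App (Var 1) (ISx it mt (4+d) (Var 3)))).
Definition Yp A it mt d := Lam (U A (5+d)) (App (Var 2) (ISx it mt (6+d) (Var 0))).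
Definition Mm A it mt d := Lam (Pi (U A (3+d)) (Srt Star))
   (Lam (sm mt (4+d) (ISx it mt (4+d) (Var 3)) (Var 0)) (App (App (Var 2) (Yp A it mt d)) (Var 0))).
Definition L3 A it mt d := Lam (U A d) (Lam (sm mt (1+d) (Var 0) (Dl A it mt (1+d)))
   (Lam (Fty A it mt d) (App (App (App (Var 0) (Dl A it mt (3+d))) (Var 1)) (Mm A it mt d)))).
Definition final A it mt := App (App (App (L0 A it mt 0) (Dl A it mt 0)) (L3 A it mt 0)) (L2 A it mt 0).

Ltac unf := cbv [U sm ISx bot Cc Om Qq Kk L0 Dl Xp L2 Fty Yp Mm L3 final Nat.add].

Ltac norm := repeat progress (simpl; repeat (first [rewrite lift_lift by lia | rewrite subst_lift by lia])).
Ltac eqt := norm; reflexivity.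

Ltac b1 := match goal with
 | |- beta1 (App (Lam _ _) _) _ => apply beta_redex
 | |- beta1 (App _ _) _ => first [apply beta_app1; b1 | apply beta_app2; b1]
 | |- beta1 (Pi _ _) _ => first [apply beta_pi1; b1 | apply beta_pi2; b1]
 | |- beta1 (Lam _ _) _ => first [apply beta_lam1; b1 | apply beta_lam2; b1]
 end.

Ltac bnorm HJ :=
  repeat (eapply (eqr_step_l _ _ _ _ HJ); [b1 | norm]);
  repeat (eapply (eqr_step_r _ _ _ _ HJ); [b1 | norm]);
  apply (je_refl _ HJ).

Ltac tcext := first [assumption | apply ext_nil | eapply ext_cons; [tcext | tcc]]
  with extmemo e G X D := first [ match goal with H : ext e G (X :: D) |- _ => idtac end
   | let H := fresh "HE" in assert (H : ext e G (X :: D)) by (eapply ext_cons; [tcext | tcc]) ]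
  with tcc := first [tc | conv]
  with tc := lazymatch goal with
   | |- typ _ (_ ++ _) (Srt Star) _ => eapply tsort; [tcext | eassumption | eqt]
   | |- typ _ (_ ++ _) (Var _) _ => eapply tvar; [tcext | reflexivity | eqt]
   | |- typ ?e (?D ++ ?G) (Pi ?X _) _ => extmemo e G X D; eapply tpi; [tcc | tcc | constructor | eqt]
   | |- typ ?e (?D ++ ?G) (Lam ?X _) _ => extmemo e G X D; eapply tlam; [tcc | tcc | eqt]
   | |- typ _ (_ ++ _) (App _ _) _ => eapply tapp; [tcc | tcc | eqt]
   | |- typ _ (_ ++ _) (lift _ 0 _) _ => eapply tleaf; [tcext | eassumption | reflexivity | eqt]
   end
  with conv := eapply tconv; [tc | eqconv | tcc]
  with eqconv := match goal with |- eqrD _ ?D _ _ => unfold eqrD;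
     match goal with HJ : judg_eq _ |- _ =>
     try (eapply (eqr_rw_l _ _ _ _ HJ); [match goal with Hq : context [eqn_lhs] |- _ => eapply (Hq D) end; [tcc | tcc] | unfold eqn_rhs; norm]);
     try (eapply (eqr_rw_r _ _ _ _ HJ); [match goal with Hq : context [eqn_lhs] |- _ => eapply (Hq D) end; [tcc | tcc] | unfold eqn_rhs; norm]);
     bnorm HJ end end.

Theorem theorem2 (eqr : term -> term -> Prop) (G : ctx) (A it mt : term) :
  judg_eq eqr ->
  typ eqr G A (Srt Box) ->
  typ eqr G it (arr (TT A) A) ->
  typ eqr G mt (arr A (TT A)) ->
  (forall (D : ctx) (u p : term),
      typ eqr (D ++ G) u (TT (lift (length D) 0 A)) ->
      typ eqr (D ++ G) p (Pow (lift (length D) 0 A)) ->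
      eqr (eqn_lhs (length D) it mt u p) (eqn_rhs (length D) A it mt u p)) ->
  exists t : term, typ eqr G t Bot.
Proof.
  intros HJ HA Hit Hmt Heq.
  pose proof (star_in _ _ _ _ HA) as Hstar.
  unfold arr, TT, Pow in Hit, Hmt. simpl in Hit, Hmt.
  exists (final A it mt). change G with ([] ++ G). unfold Bot. unf.
  Time tcc.
Qed.
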